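(* Let $R$ be a semiprime left Goldie ring. Then $\mathcal{C}_R\cap\mathrm{ass}_R(S)=\emptyset$ for every Ore set $S$ of $R$.
   Context: Rings are associative with $1$. $\mathcal{C}_R$ is the set of regular elements (non-zero-divisors on both sides) of $R$. A multiplicative set satisfies $SS\subseteq S$, $1\in S$, $0\notin S$; an Ore set additionally satisfies $Sr\cap Rs\ne\emptyset$ and $rS\cap sR\neq\emptyset$ for all $r\in R,s\in S$. $\mathrm{ass}_R(S)$ is the kernel of $R\to R\langle S^{-1}\rangle$, where $R\langle S^{-1}\rangle=R\langle X_S\rangle/I_S$, $R\langle X_S\rangle$ is freely generated by $R$ and noncommuting indeterminates $x_s$ ($s\in S$) and $I_S$ is generated by $sx_s-1,x_ss-1$. (For an Ore set, $\mathrm{ass}_R(S)=\{r: srt=0\text{ for some } s,t\in S\}$.) *)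

(* Defs.v *)
From HB Require Import structures.
From mathcomp Require Import all_boot all_order all_algebra.
Set Implicit Arguments. Unset Strict Implicit. Unset Printing Implicit Defensive.
Import GRing.Theory.
Local Open Scope ring_scope.

Section RingDefs.
Variable R : pzRingType.

Definition regular (x : R) : Prop :=
  (forall y : R, x * y = 0 -> y = 0) /\ (forall y : R, y * x = 0 -> y = 0).

Definition left_ideal (I : R -> Prop) : Prop :=
  [/\ I 0, (forall x y, I x -> I y -> I (x + y)) & (forall r x, I x -> I (r * x))].

Definition two_sided_ideal (I : R -> Prop) : Prop :=
  left_ideal I /\ (forall r x, I x -> I (x * r)).

Definition nilpotent_ideal (I : R -> Prop) : Prop :=
  exists n : nat, forall l : seq R, size l = n -> (forall x, x \in l -> I x) ->
    \prod_(x <- l) x = 0.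

Definition semiprime : Prop :=
  forall I : R -> Prop, two_sided_ideal I -> nilpotent_ideal I -> forall x, I x -> x = 0.

Definition lann (X : R -> Prop) : R -> Prop := fun r => forall x, X x -> r * x = 0.

Definition acc_left_annihilators : Prop :=
  forall X : nat -> (R -> Prop),
    (forall n r, lann (X n) r -> lann (X n.+1) r) ->
    exists N, forall n, (N <= n)%N -> forall r, lann (X n) r <-> lann (X N) r.

Definition finite_left_uniform_dim : Prop :=
  ~ exists I : nat -> (R -> Prop),
      (forall n, left_ideal (I n)) /\ (forall n, exists x, I n x /\ x != 0) /\
      (forall (k : nat) (x : nat -> R), (forall i, I i (x i)) ->
          \sum_(i < k) x i = 0 -> forall i, (i < k)%N -> x i = 0).

Definition left_Goldie : Prop := acc_left_annihilators /\ finite_left_uniform_dim.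

Definition multiplicative_set (S : R -> Prop) : Prop :=
  [/\ S 1, ~ S 0 & (forall s t, S s -> S t -> S (s * t))].

Definition ore_set (S : R -> Prop) : Prop :=
  [/\ multiplicative_set S,
      (forall r s, S s -> exists s' r', S s' /\ s' * r = r' * s)
    & (forall r s, S s -> exists s' r', S s' /\ r * s' = s * r')].

(* ass_R(S): kernel of the canonical map R -> R<S^{-1}>.  Since R -> R<S^{-1}>
   is the universal S-inverting ring homomorphism, its kernel is the set of r
   killed by every ring homomorphism f : R -> T that inverts every element
   of S. *)
Definition inverts (T : pzRingType) (f : {rmorphism R -> T}) (S : R -> Prop) : Prop :=
  forall s, S s -> exists u : T, f s * u = 1 /\ u * f s = 1.

Definition ass (S : R -> Prop) : R -> Prop :=
  fun r => forall (T : pzRingType) (f : {rmorphism R -> T}), inverts f S -> f r = 0.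

End RingDefs.

(* Main.v *)
Require Import Defs.
From HB Require Import structures.
From mathcomp Require Import all_boot all_order all_algebra.
From mathcomp Require Import boolp.
From Stdlib Require Import Classical ClassicalEpsilon ProofIrrelevance FunctionalExtensionality PropExtensionality.
Set Implicit Arguments. Unset Strict Implicit. Unset Printing Implicit Defensive.
Import GRing.Theory.
Local Open Scope ring_scope.

Section Loc.
Variable R : pzRingType.
Variable S : R -> Prop.
Hypothesis HS1 : S 1.
Hypothesis HS0 : ~ S 0.
Hypothesis HSM : forall s t, S s -> S t -> S (s * t).
Hypothesis Lore : forall r s, S s -> exists s' r', S s' /\ s' * r = r' * s.
Hypothesis Rore : forall r s, S s -> exists s' r', S s' /\ r * s' = s * r'.

Definition I (r : R) : Prop := exists s t, [/\ S s, S t & s * r * t = 0].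

Lemma I0 : I 0.
Proof. by exists 1, 1; rewrite mulr0 mul0r. Qed.

Lemma Ieq0 z : z = 0 -> I z.
Proof. by move=> ->; exact: I0. Qed.

Lemma Imull r z : I z -> I (r * z).
Proof.
case=> s [t [Ss St H]].
have [s' [r' [Ss' E]]] := Lore r Ss.
exists s', t; split => //.
by rewrite !mulrA E -!mulrA (mulrA s) H mulr0.
Qed.

Lemma Imulr r z : I z -> I (z * r).
Proof.
case=> s [t [Ss St H]].
have [s' [r' [Ss' E]]] := Rore r St.
exists s, s'; split => //.
by rewrite -!mulrA E !mulrA H !mul0r.
Qed.

Lemma IN z : I z -> I (- z).
Proof. by move=> H; rewrite -mulN1r; exact: Imull. Qed.

Lemma ID a b : I a -> I b -> I (a + b).
Proof.
case=> s1 [t1 [Ss1 St1 H1]]; case=> s2 [t2 [Ss2 St2 H2]].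
have [s' [r' [Ss' E]]] := Lore s1 Ss2.
have [u [r'' [Su F]]] := Rore t1 St2.
exists (s' * s1), (t1 * u); split; try exact: HSM.
rewrite mulrDr mulrDl.
rewrite (_ : _ * _ * (t1 * u) = s' * (s1 * a * t1) * u); last by rewrite !mulrA.
rewrite H1 mulr0 mul0r add0r E F.
rewrite (_ : _ * _ = r' * (s2 * b * t2) * r''); last by rewrite !mulrA.
by rewrite H2 mulr0 mul0r.
Qed.

Lemma IB a b : I a -> I b -> I (a - b).
Proof. by move=> Ha Hb; apply: ID => //; exact: IN. Qed.

Lemma Isatl s z : S s -> I (s * z) -> I z.
Proof.
move=> Ss [u [t [Su St H]]]; exists (u * s), t; split => //; first exact: HSM.
by rewrite -(mulrA u) H.
Qed.

Lemma Isatr s z : S s -> I (z * s) -> I z.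
Proof.
move=> Ss [u [t [Su St H]]]; exists u, (s * t); split => //; first exact: HSM.
by rewrite mulrA -(mulrA u) H.
Qed.

Lemma Itor s z : S s -> z * s = 0 -> I z.
Proof. by move=> Ss H; apply: (Isatr Ss); exact: Ieq0. Qed.

Lemma Spow w n : S w -> S (w ^+ n).
Proof. by move=> Sw; elim: n => [|n IH]; rewrite ?expr0 // exprS; exact: HSM. Qed.

Lemma notI (acc : acc_left_annihilators R) x : regular x -> ~ I x.
Proof.
case=> _ xr [s [t [Ss St H]]].
pose w := t * s.
have Sw : S w by exact: HSM.
pose X := fun n : nat => fun y : R => y = w ^+ n.+1.
have mono : forall n r, lann (X n) r -> lann (X n.+1) r.
  move=> n r Hr y ->; rewrite exprSr mulrA (Hr (w ^+ n.+1)) ?mul0r //.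
have [N HN] := acc X mono.
pose v := w ^+ N.+1.
have Sv : S v by exact: Spow.
have vv : forall r, r * (v * v) = 0 -> r * v = 0.
  move=> r Hr.
  have := (HN (N + N).+1 (leq_trans (leqnn N) (leq_trans (leq_addr N N) (leqnSn _))) r).1.
  move=> /(_ _) /(_ (w ^+ N.+1) erefl) -> //.
  move=> y ->; rewrite -Hr /v -exprD; congr (_ * _ ^+ _); by rewrite addnS addSn.
have vxv : v * x * v = 0.
  have e1 : v = w ^+ N * t * s by rewrite /v exprSr mulrA.
  have e2 : v = t * (s * w ^+ N) by rewrite /v exprS mulrA.
  rewrite {1}e1 e2 (_ : _ * _ = w ^+ N * t * (s * x * t) * s * w ^+ N); last by rewrite !mulrA.
  by rewrite H mulr0 !mul0r.
have [s' [r' [Ss' E]]] := Lore (v * x) Sv.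
have : r' * v = 0 by apply: vv; rewrite mulrA -E -mulrA vxv mulr0.
rewrite -E mulrA => /xr H0.
by apply: HS0; rewrite -H0; exact: HSM.
Qed.


Lemma I2 a1 b1 a2 b2 : I (a1 - b1) -> I (a2 - b2) -> I ((a1 + a2) - (b1 + b2)).
Proof. by move=> H1 H2; rewrite opprD addrACA; exact: ID. Qed.

Lemma lo_ex r s : exists p : R * R, S s -> S p.1 /\ p.1 * r = p.2 * s.
Proof.
case: (classic (S s)) => Hs; last by exists (0, 0).
by have [a [b [Sa E]]] := Lore r Hs; exists (a, b).
Qed.

Definition lo r s : R * R := proj1_sig (constructive_indefinite_description _ (lo_ex r s)).

Lemma loP r s : S s -> S (lo r s).1 /\ (lo r s).1 * r = (lo r s).2 * s.
Proof. exact: (proj2_sig (constructive_indefinite_description _ (lo_ex r s))). Qed.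

Record frac := Frac { den : R; num : R; denS : S den }.

Definition E (p q : frac) : Prop :=
  forall x y, I (x * den p - y * den q) -> I (x * num p - y * num q).

Lemma E_refl p : E p p.
Proof.
move=> x y; rewrite -!mulrBl => H.
by apply: Imulr; exact: (Isatr (denS p)).
Qed.

Lemma E_sym p q : E p q -> E q p.
Proof.
move=> H x y Hxy; rewrite -opprB; apply: IN; apply: H.
by rewrite -opprB; exact: IN.
Qed.

Lemma E_trans p q r : E p q -> E q r -> E p r.
Proof.
move=> Hpq Hqr x z H.
have [Sa Ea] := loP (x * den p) (denS q).
set a := (lo _ _).1 in Sa Ea; set b := (lo _ _).2 in Ea.
have H1 : I (a * x * num p - b * num q).
  by apply: Hpq; rewrite -mulrA Ea subrr; exact: I0.
have H2 : I (b * num q - a * z * num r).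
  apply: Hqr; rewrite -Ea -!mulrA -mulrBr; exact: Imull.
apply: (Isatl Sa); rewrite mulrBr !mulrA.
rewrite (_ : _ - _ = (a * x * num p - b * num q) + (b * num q - a * z * num r)).
  exact: ID.
by rewrite addrA subrK.
Qed.

Lemma Eterm p q c d f z t : S t ->
  c * (den f * t) = den p * (z * t) -> d * (den f * t) = den q * (z * t) ->
  forall x y, I (x * den p - y * den q) -> I (x * c * num f - y * d * num f).
Proof.
move=> St Hc Hd x y H.
have e : (x * den p - y * den q) * z * t = (x * c - y * d) * den f * t.
  by rewrite !mulrBl -!mulrA -Hc -Hd.
have : I ((x * c - y * d) * den f * t) by rewrite -e; apply: Imulr; exact: Imulr.
move=> /(Isatr St) /(Isatr (denS f)) /(Imulr (num f)).
by rewrite mulrBl.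
Qed.


Lemma addf_S p q : S ((lo (den p) (den q)).1 * den p).
Proof. exact: HSM (loP _ (denS q)).1 (denS p). Qed.

Definition addf p q := @Frac ((lo (den p) (den q)).1 * den p)
  ((lo (den p) (den q)).1 * num p + (lo (den p) (den q)).2 * num q) (addf_S p q).
Definition oppf p := @Frac (den p) (- num p) (denS p).
Definition zerof := @Frac 1 0 HS1.
Definition actf r p := @Frac (lo r (den p)).1 ((lo r (den p)).2 * num p) (loP r (denS p)).1.
Definition invf s (Ss : S s) p := @Frac (den p * s) (num p) (HSM (denS p) Ss).

Lemma E_add p p' q q' : E p p' -> E q q' -> E (addf p q) (addf p' q').
Proof.
move=> Hp Hq x y /=.
have [_ E1] := loP (den p) (denS q); have [_ E2] := loP (den p') (denS q').
set a := (lo (den p) _).1 in E1 *; set b := (lo (den p) _).2 in E1 *.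
set c := (lo (den p') _).1 in E2 *; set d := (lo (den p') _).2 in E2 *.
rewrite !mulrA => H.
rewrite !mulrDr !mulrA; apply: I2; first exact: Hp.
by apply: Hq; rewrite -!mulrA -E1 -E2 !mulrA.
Qed.

Lemma E_opp p q : E p q -> E (oppf p) (oppf q).
Proof.
move=> Hpq x y /= H; rewrite !mulrN opprK addrC -opprB; apply: IN; exact: Hpq.
Qed.

Lemma E_act r p q : E p q -> E (actf r p) (actf r q).
Proof.
move=> Hpq x y /=.
have [_ E1] := loP r (denS p); have [_ E2] := loP r (denS q).
move=> H; rewrite !mulrA; apply: Hpq.
by rewrite -!mulrA -E1 -E2 !mulrA -mulrBl; exact: Imulr.
Qed.

Lemma E_inv s (Ss : S s) p q : E p q -> E (invf Ss p) (invf Ss q).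
Proof.
move=> Hpq x y /= H; apply: Hpq; apply: (Isatr Ss).
by rewrite mulrBl -!mulrA.
Qed.

Definition M := {P : frac -> Prop | exists p, P = E p}.
Definition cls (p : frac) : M := exist _ (E p) (ex_intro _ p erefl).
Definition rep (m : M) : frac :=
  proj1_sig (constructive_indefinite_description _ (proj2_sig m)).
Lemma repP m : proj1_sig m = E (rep m).
Proof. exact: (proj2_sig (constructive_indefinite_description _ (proj2_sig m))). Qed.

Lemma clsE p q : cls p = cls q <-> E p q.
Proof.
split.
  move=> /(congr1 (@proj1_sig _ _)) /= ->; exact: E_refl.
move=> H; apply: eq_sig_hprop => [P a b|]; first exact: proof_irrelevance.
apply: functional_extensionality => r; apply: propositional_extensionality; split.
  by move=> H'; apply: E_trans H'; apply: E_sym.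
by move=> H'; apply: E_trans H'.
Qed.

Lemma cls_rep m : cls (rep m) = m.
Proof.
apply: eq_sig_hprop => [P a b|]; first exact: proof_irrelevance.
by rewrite /= -repP.
Qed.

Lemma rep_cls p : E (rep (cls p)) p.
Proof. by apply/clsE; rewrite cls_rep. Qed.

Lemma clsS (m : M) : exists p, m = cls p.
Proof. by exists (rep m); rewrite cls_rep. Qed.

Definition addM a b := cls (addf (rep a) (rep b)).
Definition oppM a := cls (oppf (rep a)).
Definition zeroM := cls zerof.
Definition actM r a := cls (actf r (rep a)).
Definition invM s (Ss : S s) a := cls (invf Ss (rep a)).

Lemma addM_cls p q : addM (cls p) (cls q) = cls (addf p q).
Proof. by apply/clsE; apply: E_add; exact: rep_cls. Qed.
Lemma oppM_cls p : oppM (cls p) = cls (oppf p).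
Proof. by apply/clsE; apply: E_opp; exact: rep_cls. Qed.
Lemma actM_cls r p : actM r (cls p) = cls (actf r p).
Proof. by apply/clsE; apply: E_act; exact: rep_cls. Qed.
Lemma invM_cls s (Ss : S s) p : invM Ss (cls p) = cls (invf Ss p).
Proof. by apply/clsE; apply: E_inv; exact: rep_cls. Qed.


Lemma Eterm' D1 D2 c d f z t : S t ->
  c * (den f * t) = D1 * (z * t) -> d * (den f * t) = D2 * (z * t) ->
  forall x y, I (x * D1 - y * D2) -> I (x * c * num f - y * d * num f).
Proof.
move=> St Hc Hd x y H.
have e : (x * D1 - y * D2) * z * t = (x * c - y * d) * den f * t.
  by rewrite !mulrBl -!mulrA -Hc -Hd.
have : I ((x * c - y * d) * den f * t) by rewrite -e; apply: Imulr; exact: Imulr.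
move=> /(Isatr St) /(Isatr (denS f)) /(Imulr (num f)).
by rewrite mulrBl.
Qed.

Lemma addfA p q r : E (addf (addf p q) r) (addf p (addf q r)).
Proof.
move=> x y /=.
case: (lo (den p) (den q)) (loP (den p) (denS q)) => a b /= [_ E1].
case: (lo (a * den p) (den r)) (loP (a * den p) (denS r)) => c d /= [_ E2].
case: (lo (den q) (den r)) (loP (den q) (denS r)) => a' b' /= [Sa' E3].
case: (lo (den p) (a' * den q)) (loP (den p) (HSM Sa' (denS q))) => c' d' /= [_ E4].
move=> H.
rewrite !mulrDr !mulrA !addrA.
apply: I2; [apply: I2|].
- have T := Eterm' (c := c * a) (d := c') (f := p) (z := 1) (t := 1) HS1 _ _ H.
  rewrite !mulrA in T; apply: T; by rewrite !mulr1 ?mulrA.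
- have T := Eterm' (c := c * b) (d := d' * a') (f := q) (z := 1) (t := 1) HS1 _ _ H.
  rewrite !mulrA in T; apply: T; rewrite !mulr1 -?mulrA ?E1 ?E4 //.
- have T := Eterm' (c := d) (d := d' * b') (f := r) (z := 1) (t := 1) HS1 _ _ H.
  rewrite !mulrA in T; apply: T; rewrite !mulr1 -?mulrA -?E2 -?E3 -?E4 //.
Qed.


Lemma addfC p q : E (addf p q) (addf q p).
Proof.
move=> x y /=.
case: (lo (den p) (den q)) (loP (den p) (denS q)) => a b /= [_ E1].
case: (lo (den q) (den p)) (loP (den q) (denS p)) => c d /= [_ E2].
move=> H.
rewrite !mulrDr !mulrA (addrC (y * c * num q)).
apply: I2.
- have T := Eterm' (c := a) (d := d) (f := p) (z := 1) (t := 1) HS1 _ _ H.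
  apply: T; by rewrite !mulr1 ?E2.
- have T := Eterm' (c := b) (d := c) (f := q) (z := 1) (t := 1) HS1 _ _ H.
  apply: T; by rewrite !mulr1 ?E1.
Qed.

Lemma add0f p : E (addf zerof p) p.
Proof.
move=> x y /=.
case: (lo 1 (den p)) (loP 1 (denS p)) => a b /= [_ E1].
move=> H; rewrite mulr0 add0r mulrA.
have T := Eterm' (c := b) (d := 1) (f := p) (z := 1) (t := 1) HS1 _ _ H.
rewrite !mulr1 in T; apply: T; rewrite ?mulr1 ?mul1r //; by rewrite -E1 mulr1.
Qed.

Lemma addNf p : E (addf (oppf p) p) zerof.
Proof.
move=> x y /=.
case: (lo (den p) (den p)) (loP (den p) (denS p)) => a b /= [_ E1].
move=> H; rewrite mulr0 subr0 mulrN -mulNr -mulrDl addrC mulrA.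
apply: Imulr; apply: Imull; apply: (Itor (denS p)).
by rewrite mulrBl E1 subrr.
Qed.

Lemma act1f p : E (actf 1 p) p.
Proof.
move=> x y /=.
case: (lo 1 (den p)) (loP 1 (denS p)) => a b /= [_ E1].
move=> H; rewrite mulrA.
have T := Eterm' (c := b) (d := 1) (f := p) (z := 1) (t := 1) HS1 _ _ H.
rewrite !mulr1 in T; apply: T; rewrite ?mulr1 ?mul1r //; by rewrite -E1 mulr1.
Qed.

Lemma actMf r1 r2 p : E (actf (r1 * r2) p) (actf r1 (actf r2 p)).
Proof.
move=> x y /=.
case: (lo (r1 * r2) (den p)) (loP (r1 * r2) (denS p)) => a b /= [_ E1].
case: (lo r2 (den p)) (loP r2 (denS p)) => c d /= [Sc E2].
case: (lo r1 c) (loP r1 Sc) => e g /= [_ E3].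
move=> H; rewrite !mulrA.
have T := Eterm' (c := b) (d := g * d) (f := p) (z := r1 * r2) (t := 1) HS1 _ _ H.
rewrite !mulrA in T; apply: T; rewrite ?mulr1 //.
  by rewrite -E1 mulrA.
by rewrite -mulrA -E2 mulrA -E3.
Qed.

Lemma actDf r1 r2 p : E (actf (r1 + r2) p) (addf (actf r1 p) (actf r2 p)).
Proof.
move=> x y /=.
case: (lo (r1 + r2) (den p)) (loP (r1 + r2) (denS p)) => a b /= [_ E1].
case: (lo r1 (den p)) (loP r1 (denS p)) => c1 d1 /= [Sc1 E2].
case: (lo r2 (den p)) (loP r2 (denS p)) => c2 d2 /= [Sc2 E3].
case: (lo c1 c2) (loP c1 Sc2) => al be /= [_ E4].
move=> H; rewrite !mulrA.
rewrite (_ : y * (al * d1 * num p + be * d2 * num p) = y * (al * d1 + be * d2) * num p); last first.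
  by rewrite -mulrDl mulrA.
have T := Eterm' (c := b) (d := al * d1 + be * d2) (f := p) (z := r1 + r2) (t := 1) HS1 _ _ H.
apply: T; rewrite !mulr1 //.
by rewrite mulrDl -!mulrA -E2 -E3 !mulrDr !mulrA E4.
Qed.

Lemma actAf r p q : E (actf r (addf p q)) (addf (actf r p) (actf r q)).
Proof.
move=> x y /=.
case: (lo (den p) (den q)) (loP (den p) (denS q)) => a b /= [Sa E1].
case: (lo r (a * den p)) (loP r (HSM Sa (denS p))) => e g /= [_ E2].
case: (lo r (den p)) (loP r (denS p)) => c d /= [Sc E3].
case: (lo r (den q)) (loP r (denS q)) => c' d' /= [Sc' E4].
case: (lo c c') (loP c Sc') => mu nu /= [_ E5].
move=> H; rewrite !mulrDr !mulrA.
apply: I2.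
- have T := Eterm' (c := g * a) (d := mu * d) (f := p) (z := r) (t := 1) HS1 _ _ H.
  rewrite !mulrA in T; apply: T; rewrite !mulr1 -?mulrA -?E2 -?E3 //.
- have T := Eterm' (c := g * b) (d := nu * d') (f := q) (z := r) (t := 1) HS1 _ _ H.
  rewrite !mulrA in T; apply: T; rewrite !mulr1 -?mulrA -?E1 -?E2 -?E4 //.
  by rewrite !mulrA E5.
Qed.

Lemma invRf s (Ss : S s) p : E (actf s (invf Ss p)) p.
Proof.
move=> x y /=.
case: (lo s (den p * s)) (loP s (HSM (denS p) Ss)) => a b /= [_ E1].
move=> H; rewrite mulrA.
have T := Eterm' (c := b) (d := 1) (f := p) (z := 1) (t := s) Ss _ _ H.
rewrite !mulr1 in T; apply: T; by rewrite !mul1r.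
Qed.

Lemma invLf s (Ss : S s) p : E (invf Ss (actf s p)) p.
Proof.
move=> x y /=.
case: (lo s (den p)) (loP s (denS p)) => a b /= [_ E1].
move=> H; rewrite mulrA.
have T := Eterm' (c := b) (d := 1) (f := p) (z := 1) (t := 1) HS1 _ _ H.
rewrite !mulr1 in T; apply: T; rewrite ?mulr1 ?mul1r //; by rewrite -E1.
Qed.

Lemma act_nz x : E (actf x (@Frac 1 1 HS1)) zerof -> I x.
Proof.
rewrite /E /=.
case: (lo x 1) (loP x HS1) => a b /= [Sa E1].
move=> H; rewrite mulr1 in E1.
have := H 1 a; rewrite !mul1r !mulr1 subrr mulr0 subr0 -E1 => /(_ I0).
exact: Isatl.
Qed.


Lemma addMA : associative addM.
Proof.
move=> a b c; have [p ->] := clsS a; have [q ->] := clsS b; have [r ->] := clsS c.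
by rewrite !addM_cls; apply/clsE; apply: E_sym; exact: addfA.
Qed.

Lemma addMC : commutative addM.
Proof.
move=> a b; have [p ->] := clsS a; have [q ->] := clsS b.
by rewrite !addM_cls; apply/clsE; exact: addfC.
Qed.

Lemma add0M : left_id zeroM addM.
Proof.
move=> a; have [p ->] := clsS a.
by rewrite /zeroM addM_cls; apply/clsE; exact: add0f.
Qed.

Lemma addNM : left_inverse zeroM oppM addM.
Proof.
move=> a; have [p ->] := clsS a.
by rewrite oppM_cls addM_cls; apply/clsE; exact: addNf.
Qed.

HB.instance Definition _ := gen_eqMixin M.
HB.instance Definition _ := gen_choiceMixin M.
HB.instance Definition _ := GRing.isZmodule.Build M addMA addMC add0M addNM.

Lemma addE (a b : M) : a + b = addM a b.
Proof. by []. Qed.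

Lemma actM_add r (a b : M) : actM r (a + b) = actM r a + actM r b.
Proof.
have [p ->] := clsS a; have [q ->] := clsS b.
rewrite !addE (addM_cls p q) (actM_cls r (addf p q)) (actM_cls r p) (actM_cls r q) (addM_cls (actf r p) (actf r q)); apply/clsE; exact: actAf.
Qed.

Lemma actM1 (a : M) : actM 1 a = a.
Proof. have [p ->] := clsS a; by rewrite actM_cls; apply/clsE; exact: act1f. Qed.

Lemma actMM r1 r2 (a : M) : actM (r1 * r2) a = actM r1 (actM r2 a).
Proof. have [p ->] := clsS a; by rewrite !actM_cls; apply/clsE; exact: actMf. Qed.

Lemma actMD r1 r2 (a : M) : actM (r1 + r2) a = actM r1 a + actM r2 a.
Proof.
have [p ->] := clsS a; rewrite addE.
by rewrite !actM_cls addM_cls; apply/clsE; exact: actDf.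
Qed.

Lemma invMR s (Ss : S s) (a : M) : actM s (invM Ss a) = a.
Proof. have [p ->] := clsS a; by rewrite invM_cls actM_cls; apply/clsE; exact: invRf. Qed.

Lemma invML s (Ss : S s) (a : M) : invM Ss (actM s a) = a.
Proof. have [p ->] := clsS a; by rewrite actM_cls invM_cls; apply/clsE; exact: invLf. Qed.

Lemma invM_add s (Ss : S s) (a b : M) : invM Ss (a + b) = invM Ss a + invM Ss b.
Proof.
by rewrite -{1}(invMR Ss a) -{1}(invMR Ss b) -actM_add invML.
Qed.

Record endo := Endo { ap : M -> M; apD : forall a b, ap (a + b) = ap a + ap b }.

Lemma endo_eq (f g : endo) : (forall a, ap f a = ap g a) -> f = g.
Proof.
case: f => f fD; case: g => g gD /= H.
have e : f = g by apply: functional_extensionality.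
subst g; congr Endo; exact: proof_irrelevance.
Qed.

Definition zeroT := @Endo (fun _ => 0) (fun a b => esym (addr0 0)).
Lemma oppT_D (f : endo) a b : - ap f (a + b) = - ap f a + - ap f b.
Proof. by rewrite apD opprD. Qed.
Definition oppT (f : endo) := @Endo (fun a => - ap f a) (oppT_D f).
Lemma addT_D (f g : endo) a b : ap f (a + b) + ap g (a + b) = (ap f a + ap g a) + (ap f b + ap g b).
Proof. by rewrite !apD addrACA. Qed.
Definition addT (f g : endo) := @Endo (fun a => ap f a + ap g a) (addT_D f g).

Lemma addTA : associative addT.
Proof. by move=> f g h; apply: endo_eq => a /=; rewrite addrA. Qed.
Lemma addTC : commutative addT.
Proof. by move=> f g; apply: endo_eq => a /=; rewrite addrC. Qed.
Lemma add0T : left_id zeroT addT.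
Proof. by move=> f; apply: endo_eq => a /=; rewrite add0r. Qed.
Lemma addNT : left_inverse zeroT oppT addT.
Proof. by move=> f; apply: endo_eq => a /=; rewrite addNr. Qed.

HB.instance Definition _ := gen_eqMixin endo.
HB.instance Definition _ := gen_choiceMixin endo.
HB.instance Definition _ := GRing.isZmodule.Build endo addTA addTC add0T addNT.

Definition oneT := @Endo id (fun a b => erefl).
Lemma mulT_D (f g : endo) a b : ap f (ap g (a + b)) = ap f (ap g a) + ap f (ap g b).
Proof. by rewrite !apD. Qed.
Definition mulT (f g : endo) := @Endo (fun a => ap f (ap g a)) (mulT_D f g).

Lemma mulTA : associative mulT.
Proof. by move=> f g h; apply: endo_eq. Qed.
Lemma mul1T : left_id oneT mulT.
Proof. by move=> f; apply: endo_eq. Qed.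
Lemma mulT1 : right_id oneT mulT.
Proof. by move=> f; apply: endo_eq. Qed.
Lemma mulTDl : left_distributive mulT +%R.
Proof. by move=> f g h; apply: endo_eq. Qed.
Lemma mulTDr : right_distributive mulT +%R.
Proof. by move=> f g h; apply: endo_eq => a /=; rewrite apD. Qed.

HB.instance Definition _ := GRing.Zmodule_isPzRing.Build endo mulTA mul1T mulT1 mulTDl mulTDr.

Definition fR (r : R) : endo := @Endo (actM r) (actM_add r).

Lemma fR_sub : zmod_morphism fR.
Proof.
move=> r1 r2; apply: endo_eq => a.
rewrite (_ : ap (fR r1 - fR r2) a = actM r1 a - actM r2 a) //=.
by apply: (addIr (actM r2 a)); rewrite -actMD subrK subrK.
Qed.

Lemma fR_mon : monoid_morphism fR.
Proof.
split; first by apply: endo_eq => a; exact: actM1.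
by move=> r1 r2; apply: endo_eq => a; exact: actMM.
Qed.

HB.instance Definition _ := GRing.isZmodMorphism.Build R endo fR fR_sub.
HB.instance Definition _ := GRing.isMonoidMorphism.Build R endo fR fR_mon.

Definition invT s (Ss : S s) := @Endo (invM Ss) (invM_add Ss).

Lemma fR_inverts : inverts (fR : {rmorphism R -> endo}) S.
Proof.
move=> s Ss; exists (invT Ss); split; apply: endo_eq => a /=.
  exact: invMR.
exact: invML.
Qed.

Lemma main_loc (acc : acc_left_annihilators R) x : regular x -> ~ ass S x.
Proof.
move=> rx Hx.
have := Hx endo fR fR_inverts => H0.
have : ap (fR x) (cls (@Frac 1 1 HS1)) = ap 0 (cls (@Frac 1 1 HS1)) by rewrite H0.
rewrite /= actM_cls => /clsE /act_nz.
exact: notI.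
Qed.

End Loc.

Theorem theorem5p2 (R : pzRingType) :
  semiprime R -> left_Goldie R ->
  forall S : R -> Prop, ore_set S ->
  forall x : R, regular x -> ~ ass S x.
Proof.
move=> _ [acc _] S [[S1 S0 SM] L Ro] x rx.
exact: (main_loc S1 S0 SM L Ro acc rx).
Qed.
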